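(* Let $n\ge 1$ be an integer, let $\alpha\in[0,1)$, and let $\overrightarrow{P_n}$ be the directed path with vertex set $\{v_1,\dots,v_n\}$ and arc set $\{(v_1,v_2),(v_2,v_3),\dots,(v_{n-1},v_n)\}$. Then the singular values of $A_{\alpha}(\overrightarrow{P_n})$ are, as a multiset, $0$ (with multiplicity $1$) together with $$\sqrt{2\alpha^2-2\alpha+1+2\alpha(1-\alpha)\cos\frac{j\pi}{n}},\qquad j=1,2,\dots,n-1.$$
   Context: Digraphs are simple: a finite vertex set and a set of arcs, which are ordered pairs of distinct vertices, with no parallel arcs (a pair of opposite arcs $(u,v),(v,u)$ is allowed). For a digraph $D$ on vertices $v_1,\dots,v_n$, the adjacency matrix $A(D)=(a_{ij})$ has $a_{ij}=1$ if $(v_i,v_j)$ is an arc and $0$ otherwise; $d_i^+$ is the outdegree of $v_i$ (number of arcs with tail $v_i$), and $\Delta^+(D)=\mathrm{diag}(d_1^+,\dots,d_n^+)$. For $\alpha\in[0,1)$, $A_\alpha(D)=\alpha\Delta^+(D)+(1-\alpha)A(D)$. The singular values of a real square matrix $B$ are the nonnegative square roots of the eigenvalues of $BB^{T}$, counted with multiplicity. *)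

(* Defs.v *)
From HB Require Import structures.
From mathcomp Require Import all_boot all_order all_algebra.
From mathcomp Require Import reals trigo.
Set Implicit Arguments. Unset Strict Implicit. Unset Printing Implicit Defensive.
Import Order.TTheory GRing.Theory Num.Theory.
Local Open Scope ring_scope.

(* A simple digraph on vertices 'I_n (v_{i+1} <-> i) is given by its arc
   relation; arcs join distinct vertices (loopless). *)

Definition adj_mx (R : nzRingType) (n : nat) (arc : rel 'I_n) : 'M[R]_n :=
  \matrix_(i, j) (arc i j)%:R.

Definition outdeg (n : nat) (arc : rel 'I_n) (i : 'I_n) : nat :=
  #|[set j | arc i j]|.

Definition outdeg_mx (R : nzRingType) (n : nat) (arc : rel 'I_n) : 'M[R]_n :=
  diag_mx (\row_i (outdeg arc i)%:R).

Definition A_alpha (R : nzRingType) (n : nat) (alpha : R) (arc : rel 'I_n)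
  : 'M[R]_n :=
  alpha *: outdeg_mx R arc + (1 - alpha) *: adj_mx R arc.

Definition dpath_arc (n : nat) : rel 'I_n := fun i j => (i.+1 == j)%N.

(* s is the multiset of singular values of B : the eigenvalues of B B^T,
   counted with multiplicity, are the roots of its characteristic polynomial
   listed in e, and s is (as a multiset) the list of their nonnegative square
   roots. *)
Definition singular_values (R : rcfType) (n : nat) (B : 'M[R]_n) (s : seq R)
  : Prop :=
  exists e : seq R,
    char_poly (B *m B^T) = \prod_(x <- e) ('X - x%:P) /\
    perm_eq s [seq Num.sqrt x | x <- e].

(* Main.v *)
Require Import Defs.
From HB Require Import structures.
From mathcomp Require Import all_boot all_order all_algebra.
From mathcomp Require Import reals trigo.
From mathcomp Require Import zify ring lra.
Import Order.TTheory GRing.Theory Num.Theory.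
Local Open Scope ring_scope.
Set Implicit Arguments. Unset Strict Implicit. Unset Printing Implicit Defensive.

Set Implicit Arguments. Unset Strict Implicit. Unset Printing Implicit Defensive.
Import Order.TTheory GRing.Theory Num.Theory.
Local Open Scope ring_scope.

Definition tri (R : nzRingType) (d c : R) k : 'M[R]_k :=
  \matrix_(i, j) (if (i : nat) == j then d
                  else if ((i.+1 == j) || (j.+1 == i))%N then c else 0).

Lemma det_tri (R : comNzRingType) (d c : R) k :
  \det (tri d c k.+2) = d * \det (tri d c k.+1) - c ^+ 2 * \det (tri d c k).
Proof.
rewrite (expand_det_row _ ord_max) !big_ord_recr /= big1 ?add0r; last first.
  move=> j _; rewrite !mxE /=.
  have := ltn_ord j; case: eqP => [/= ?|_]; first lia.
  case: ifP => [/orP[/eqP|/eqP]|_]; [lia|lia|by rewrite mul0r].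
rewrite !mxE /=.
have -> : (k.+1 == k.+1)%N = true by lia.
have -> : (k.+1 == k)%N = false by lia.
have -> : (k.+2 == k)%N = false by lia.
rewrite /= /cofactor.
have -> : row' ord_max (col' ord_max (tri d c k.+2)) = tri d c k.+1.
  apply/matrixP => i j; rewrite !mxE /= /bump.
  have := ltn_ord i; have := ltn_ord j => hj hi.
  have -> : (k.+1 <= i)%N = false by lia.
  by have -> : (k.+1 <= j)%N = false by lia.
set N := row' _ (col' _ _).
rewrite (expand_det_col N ord_max) big_ord_recr /= big1 ?add0r; last first.
  move=> i _; rewrite !mxE /= /bump.
  have := ltn_ord i => hi. have -> : (k.+1 <= i)%N = false by lia.
  rewrite leqnn add1n.
  case: eqP => [/= ?|_]; first lia.
  case: ifP => [/orP[/eqP|/eqP]|_]; [lia|lia|by rewrite mul0r].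
have -> : N ord_max ord_max = c.
  rewrite !mxE /= /bump !leqnn /= ltnn add0n add1n.
  have -> : (k == k.+1)%N = false by lia.
  by have -> : (k.+1 == k.+1)%N = true by lia.
rewrite /cofactor.
have -> : row' ord_max (col' ord_max N) = tri d c k.
  apply/matrixP => i j; rewrite !mxE /= /bump.
  have := ltn_ord i; have := ltn_ord j => hj hi.
  rewrite /= in hi hj.
  rewrite !(leqNgt k i) !(leqNgt k j) hi hj /= !add0n.
  rewrite (leqNgt k j) hj (ltnNge k i) (ltnW hi) /=.
  by rewrite !add0n.
have sg : forall m, (-1) ^+ (m + m) = 1 :> R.
  by move=> m; rewrite -signr_odd oddD addbb.
have -> : (k.+1 + k)%N = (k + k).+1 by lia.
rewrite exprS /= !sg.
ring.
Qed.


Definition P (R : comNzRingType) (a b : R) k : {poly R} :=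
  \det (tri ('X - a%:P) (- b%:P) k).

Lemma P0 (R : comNzRingType) (a b : R) : P a b 0 = 1.
Proof. exact: det_mx00. Qed.

Lemma P1 (R : comNzRingType) (a b : R) : P a b 1 = 'X - a%:P.
Proof. by rewrite /P det_mx11 mxE. Qed.

Lemma P_rec (R : comNzRingType) (a b : R) k :
  P a b k.+2 = ('X - a%:P) * P a b k.+1 - (b ^+ 2)%:P * P a b k.
Proof. by rewrite /P det_tri sqrrN rmorphXn. Qed.

Lemma P_size (R : comNzRingType) (a b : R) k :
  size (P a b k) = k.+1 /\ lead_coef (P a b k) = 1.
Proof.
suff: (size (P a b k) = k.+1 /\ lead_coef (P a b k) = 1) /\
      (size (P a b k.+1) = k.+2 /\ lead_coef (P a b k.+1) = 1) by case.
elim: k => [|k [[s0 l0] [s1 l1]]].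
  rewrite P0 P1 size_poly1 lead_coef1 size_XsubC lead_coefXsubC; done.
split; first by [].
have m1 : P a b k.+1 \is monic by exact/monicP.
have sM : size (('X - a%:P) * P a b k.+1) = k.+3.
  by rewrite size_monicM ?monicXsubC ?size_XsubC ?s1 // -size_poly_gt0 s1.
have sQ : (size (- ((b ^+ 2)%:P * P a b k))%R < size (('X - a%:P) * P a b k.+1)%R)%N.
  by rewrite size_polyN mul_polyC sM (leq_ltn_trans (size_scale_leq _ _)) // s0.
rewrite P_rec size_polyDl // lead_coefDl // sM; split => //.
by apply/monicP; rewrite monicMl ?monicXsubC.
Qed.

Lemma sin_step (R : realType) (t : R) k :
  sin ((k.+2)%:R * t) = 2 * cos t * sin ((k.+1)%:R * t) - sin (k%:R * t).
Proof.
have e1 : (k.+2)%:R * t = (k.+1)%:R * t + t.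
  by rewrite -[k.+2]addn1 natrD mulrDl mul1r.
have e2 : k%:R * t = (k.+1)%:R * t - t.
  by rewrite -[k.+1]addn1 natrD mulrDl mul1r addrK.
rewrite e1 e2 sinD sinB; ring.
Qed.

Lemma P_eval (R : realType) (a b t : R) k :
  (P a b k).[a + 2 * b * cos t] * sin t = b ^+ k * sin ((k.+1)%:R * t).
Proof.
suff: (P a b k).[a + 2 * b * cos t] * sin t = b ^+ k * sin ((k.+1)%:R * t) /\
      (P a b k.+1).[a + 2 * b * cos t] * sin t = b ^+ k.+1 * sin ((k.+2)%:R * t)
  by case.
elim: k => [|k [h0 h1]].
  rewrite P0 P1 !hornerE (sin_step t 0) mulr0n mul0r sin0 expr1.
  have e : 1%:R * t = t :> R by rewrite mul1r.
  rewrite e; split; first by [].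
  ring.
split; first by [].
rewrite P_rec !hornerE (sin_step t k.+1).
set p1 := (P a b k.+1).[_]; set p0 := (P a b k).[_].
transitivity (2 * b * cos t * (p1 * sin t) - b ^+ 2 * (p0 * sin t)); first ring.
rewrite h0 h1 !exprS; ring.
Qed.

Lemma sin_natpi (R : realType) j : sin (j%:R * pi) = 0 :> R.
Proof.
elim: j => [|j IH]; first by rewrite mul0r sin0.
by rewrite -addn1 natrD mulrDl mul1r sinDpi IH oppr0.
Qed.

Lemma prod_const_iota (R : comNzRingType) (c : R) s m :
  \prod_(j <- iota s m) c = c ^+ m.
Proof.
elim: m s => [|m IH] s; first by rewrite big_nil.
by rewrite /= big_cons IH exprS.
Qed.

Lemma P_prod (R : realType) (a b : R) m :
  P a b m = \prod_(j <- iota 1 m)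
              ('X - (a + 2 * b * cos (j%:R * pi / (m.+1)%:R))%:P).
Proof.
have [->|b0] := eqVneq b 0.
  under eq_bigr do rewrite mulr0 mul0r addr0.
  rewrite prod_const_iota.
  suff: P a 0 m = ('X - a%:P) ^+ m /\ P a 0 m.+1 = ('X - a%:P) ^+ m.+1 by case.
  elim: m => [|m [h0 h1]]; first by rewrite P0 P1 expr0 expr1.
  split=> //; rewrite P_rec h1 h0 expr0n /= polyC0 mul0r subr0.
  by rewrite -exprS.
pose th := fun j : nat => (j%:R * pi / (m.+1)%:R : R).
have n0 : (m.+1)%:R != 0 :> R by rewrite pnatr_eq0.
have thr : forall j, (1 <= j <= m)%N -> 0 < th j < pi.
  move=> j /andP[j1 jm]; apply/andP; split.
    by rewrite /th divr_gt0 ?mulr_gt0 ?ltr0n ?pi_gt0 //; lia.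
  rewrite /th ltr_pdivrMr ?ltr0n // mulrC ltr_pM2l ?pi_gt0 // ltr_nat; lia.
set rs := [seq a + 2 * b * cos (th j) | j <- iota 1 m].
have hroot : all (root (P a b m)) rs.
  apply/allP => x /mapP [j]; rewrite mem_iota => hj ->.
  have [t0 tpi] := andP (thr j (ltac:(lia))).
  apply/rootP; have := P_eval a b (th j) m.
  have -> : (m.+1)%:R * th j = j%:R * pi by rewrite /th mulrC divfK.
  rewrite sin_natpi mulr0 => /eqP; rewrite mulf_eq0 => /orP[/eqP //|].
  by rewrite gt_eqF // sin_gt0_pi // t0 tpi.
have huniq : uniq_roots rs.
  rewrite uniq_rootsE map_inj_in_uniq ?iota_uniq //.
  move=> i j; rewrite !mem_iota => hi hj /addrI /mulfI.
  have -> : (2 * b != 0) by rewrite mulf_neq0 // pnatr_eq0.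
  move=> /(_ isT) /cos_inj.
  have [i0 ipi] := andP (thr i (ltac:(lia))).
  have [j0 jpi] := andP (thr j (ltac:(lia))).
  rewrite !in_itv /= !ltW // => /(_ isT isT).
  move/(congr1 (fun x => x * (m.+1)%:R / pi)).
  rewrite /th !divfK // !mulfK ?gt_eqF ?pi_gt0 //.
  by move/eqP; rewrite eqr_nat => /eqP.
have [q hq] := uniq_roots_prod_XsubC hroot huniq.
rewrite big_map in hq.
have [sP lP] := P_size a b m.
have q0 : q != 0 by apply/eqP => q0; move: sP; rewrite hq q0 mul0r size_poly0.
have sq : size q = 1%N.
  move: sP; rewrite hq size_Mmonic // ?monic_prod_XsubC // size_prod_XsubC size_iota.
  by move: (size q) => s; lia.
have /size_poly1P [c c0 qc] : size q == 1%N by rewrite sq.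
move: lP; rewrite hq qc lead_coefM lead_coefC.
rewrite (monicP (monic_prod_XsubC _ _ _)) mulr1 => c1.
by rewrite c1 mul1r.
Qed.

Lemma card_out n (i : 'I_n) : #|[set j : 'I_n | (i.+1 == j)%N]| = (i.+1 < n)%N.
Proof.
case: ltnP => h.
  rewrite (_ : [set j | _] = [set Ordinal h]) ?cards1 //.
  by apply/setP => j; rewrite !inE -val_eqE /= eq_sym.
rewrite (_ : [set j | _] = set0) ?cards0 //.
apply/setP => j; rewrite !inE; have := ltn_ord j.
by case: eqP => // <-; lia.
Qed.

Lemma Aent (R : comNzRingType) n (al : R) (i l : 'I_n) :
  A_alpha al (@dpath_arc n) i l =
  al * ((i.+1 < n)%N && (l == i :> nat))%:R + (1 - al) * (i.+1 == l)%:R.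
Proof.
rewrite /A_alpha /outdeg_mx /adj_mx !mxE /dpath_arc /outdeg card_out.
congr (_ * _ + _).
case: (i =P l) => [->|ne]; first by rewrite eqxx andbT mulr1n.
have -> : (l == i :> nat) = false.
  by apply/eqP => /val_inj e; apply: ne.
by rewrite andbF mulr0n.
Qed.

Lemma ptw (R : comNzRingType) (al be : R) (l i j : nat) :
  (al * (l == i)%:R + be * (i.+1 == l)%:R) * (al * (l == j)%:R + be * (j.+1 == l)%:R)
  = (l == i)%:R * (al * (al * (i == j)%:R + be * (j.+1 == i)%:R))
  + (l == i.+1)%:R * (be * (al * (i.+1 == j)%:R + be * (j.+1 == i.+1)%:R)).
Proof.
have f1 : (i.+1 == i) = false by lia.
have f2 : (i == i.+1) = false by lia.
have [->|h1] := eqVneq l i.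
  rewrite ?f1 ?f2 /=; ring.
have [->|h2] := eqVneq l i.+1.
  rewrite ?f1 ?f2 /=; ring.
rewrite /=; ring.
Qed.

Lemma sum_ind (R : comNzRingType) n (x : nat) (c : R) :
  \sum_(l < n) (l == x :> nat)%:R * c = (x < n)%:R * c.
Proof.
rewrite -big_distrl /=; congr (_ * _).
elim: n => [|n IH]; first by rewrite big_ord0.
rewrite big_ord_recr /= IH -natrD; congr (_%:R); lia.
Qed.

Lemma Bent (R : comNzRingType) m (al : R) (i j : 'I_m.+1) :
  (i < m)%N -> (j < m)%N ->
  (A_alpha al (@dpath_arc m.+1) *m (A_alpha al (@dpath_arc m.+1))^T) i j
  = al * (al * (i == j :> nat)%:R + (1 - al) * (j.+1 == i)%:R)
     + (1 - al) * (al * (i.+1 == j)%:R + (1 - al) * (j.+1 == i.+1)%:R).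
Proof.
move=> hi hj; rewrite mxE.
transitivity (\sum_(l < m.+1) (al * ((i.+1 < m.+1)%N && (l == i :> nat))%:R + (1 - al) * (i.+1 == l)%:R) *
  (al * ((j.+1 < m.+1)%N && (l == j :> nat))%:R + (1 - al) * (j.+1 == l)%:R)).
  by apply: eq_bigr => l _; rewrite [(_)^T l j]mxE !Aent.
have -> : (i.+1 < m.+1)%N = true by lia.
have -> : (j.+1 < m.+1)%N = true by lia.
under eq_bigr do rewrite !andTb ptw.
rewrite big_split /= !sum_ind.
have -> : (i < m.+1)%N = true by lia.
have -> : (i.+1 < m.+1)%N = true by lia.
by rewrite /= !mul1r.
Qed.

Lemma Blast (R : comNzRingType) m (al : R) (j : 'I_m.+1) :
  (A_alpha al (@dpath_arc m.+1) *m (A_alpha al (@dpath_arc m.+1))^T) ord_max j = 0.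
Proof.
rewrite mxE big1 // => l _; rewrite [(_)^T l j]mxE Aent /=.
have -> : (m.+2 <= m.+1)%N = false by lia.
have -> : (m.+1 == l)%N = false by have := ltn_ord l; lia.
by rewrite /= !mulr0 addr0 mul0r.
Qed.

Lemma cpmxE (R : nzRingType) n (M : 'M[R]_n) i j :
  char_poly_mx M i j = 'X *+ (i == j) - (M i j)%:P.
Proof. by rewrite !mxE. Qed.

Lemma charB (R : comNzRingType) m (al : R) :
  char_poly (A_alpha al (@dpath_arc m.+1) *m (A_alpha al (@dpath_arc m.+1))^T)
  = 'X * P (al ^+ 2 + (1 - al) ^+ 2) (al * (1 - al)) m.
Proof.
rewrite /char_poly (expand_det_row _ ord_max) big_ord_recr /= big1 ?add0r; last first.
  move=> j _; rewrite cpmxE Blast polyC0 subr0.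
  have -> : (ord_max == widen_ord (leqnSn m) j) = false.
    by apply/negbTE; rewrite -val_eqE /=; have := ltn_ord j; lia.
  by rewrite mulr0n mul0r.
rewrite /cofactor row'_col'_char_poly_mx.
rewrite cpmxE Blast polyC0 subr0 eqxx mulr1n -signr_odd oddD addbb expr0 mul1r.
congr (_ * _); rewrite /P; congr (\det _); apply/matrixP => i j.
rewrite cpmxE.
rewrite (_ : row' _ (col' _ _) i j = (A_alpha al (@dpath_arc m.+1) *m (A_alpha al (@dpath_arc m.+1))^T) (lift ord_max i) (lift ord_max j)); last by rewrite !mxE.
rewrite Bent ?lift_max ?ltn_ord // [in RHS]mxE.
have [<-|ne] := eqVneq i j.
  have f1 : (i.+1 == i :> nat) = false by lia.
  rewrite f1 ?eqxx /= mulr1n; congr (_ - _%:P); ring.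
have ne' : (i == j :> nat) = false by apply/negbTE.
have ne'' : (j == i :> nat) = false by rewrite eq_sym.
rewrite ne' /= eqSS ne'' mulr0n sub0r.
case E1: (i.+1 == j)%N; case E2: (j.+1 == i)%N; rewrite /=; try lia.
- congr (- _%:P); ring.
- congr (- _%:P); ring.
- apply/eqP; rewrite oppr_eq0 polyC_eq0 /= !mulr0n; apply/eqP; ring.
Qed.

Unset Implicit Arguments.

Theorem lemma2p1 (R : realType) (n : nat) (alpha : R) :
  (1 <= n)%N -> 0 <= alpha -> alpha < 1 ->
  singular_values (A_alpha alpha (@dpath_arc n))
    (0 :: [seq Num.sqrt (2 * alpha ^+ 2 - 2 * alpha + 1
                         + 2 * alpha * (1 - alpha)
                           * cos (j%:R * pi / n%:R))
          | j <- iota 1 n.-1]).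
Proof.
move=> n1 a0 a1; case: n n1 => [//|m] _.
exists (0 :: [seq (2 * alpha ^+ 2 - 2 * alpha + 1
                   + 2 * alpha * (1 - alpha) * cos (j%:R * pi / (m.+1)%:R))
             | j <- iota 1 m]).
split.
  rewrite charB P_prod big_cons polyC0 subr0 big_map.
  congr (_ * _); apply: eq_bigr => j _; congr ('X - _%:P); ring.
by rewrite /= sqrtr0 -map_comp.
Qed.
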